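(* Let $S_n^0$ be the set of elements of $S_n$ all of whose coordinates are nonzero (i.e. $S_n^0=\{s\in\{-1,1\}^n: s_1=1\}$). Then $S_n^0$ is a minimal element (with respect to inclusion) of the poset $\mathcal{E}_n=\{X\subseteq S_n:\mathrm{Elim}(X)=S_n\}$; that is, $\mathrm{Elim}(S_n^0)=S_n$ and $\mathrm{Elim}(Y)\neq S_n$ for every proper subset $Y\subsetneq S_n^0$.
   Context: $S_n$ is the set of all nonzero $n$-tuples in $\{-1,0,1\}^n$ whose first nonzero entry equals $1$. A tuple $t=(t_1,\dots,t_n)\in\{1,0,-1,u\}^n$ ($u$ a formal symbol) eliminates $s\in S_n$ if: (i) $t_i\neq0$ and $s_i\neq0$ for some $i$; (ii) there is $k\in\{+1,-1\}$ with $t_i=ks_i$ for all $i$ with $s_i\neq0$ and $t_i\neq0$; (iii) $s_i=0$ whenever $t_i=u$. For $X\subseteq S_n$, $\mathrm{Elim}(X)$ is the set of elements of $S_n$ eliminated by at least one element of $X$. *)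

(* Defs.v *)
From mathcomp Require Import all_boot all_order all_algebra.
Set Implicit Arguments. Unset Strict Implicit. Unset Printing Implicit Defensive.
Import GRing.Theory Num.Theory.
Local Open Scope ring_scope.

Definition vec (n : nat) := 'I_n -> int.

Definition inS (n : nat) (s : vec n) : Prop :=
  (forall i, s i = 0 \/ s i = 1 \/ s i = -1) /\
  exists i : 'I_n, s i = 1 /\ forall j : 'I_n, (j < i)%N -> s j = 0.

Definition inS0 (n : nat) (s : vec n) : Prop := inS s /\ forall i, s i <> 0.

(* Entries of eliminating tuples: an integer value or the formal symbol u. *)
Inductive tsym := TV of int | TU.

Definition eliminates (n : nat) (t : 'I_n -> tsym) (s : vec n) : Prop :=
  (exists i, t i <> TV 0 /\ s i <> 0) /\
  (exists k : int, (k = 1 \/ k = -1) /\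
     forall i, s i <> 0 -> t i <> TV 0 -> t i = TV (k * s i)) /\
  (forall i, t i = TU -> s i = 0).

Definition Elim (n : nat) (X : vec n -> Prop) (s : vec n) : Prop :=
  inS s /\ exists t, X t /\ eliminates (fun i => TV (t i)) s.

(* Main.v *)
Require Import Defs.
From mathcomp Require Import all_boot all_order all_algebra.
From Stdlib Require Import FunctionalExtensionality.
Import GRing.Theory Num.Theory.
Local Open Scope ring_scope.

Lemma S0_first (n : nat) (s : vec n) : inS0 s ->
  exists i : 'I_n, s i = 1 /\ forall j : 'I_n, (j < i)%N -> False.
Proof.
move=> [[_ [i [Hi Hj]]] Hnz]; exists i; split => // j /Hj; exact: Hnz.
Qed.

Lemma S0_eq (n : nat) (t y : vec n) : inS0 t -> inS0 y ->
  eliminates (fun i => TV (t i)) y -> t = y.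
Proof.
move=> Ht Hy [_ [[k [Hk Hall]] _]].
have [it [Ht1 Htj]] := @S0_first _ _ Ht.
have [iy [Hy1 Hyj]] := @S0_first _ _ Hy.
have E : it = iy.
  apply: val_inj; case: (ltngtP it iy) => // h; [case: (Hyj _ h)|case: (Htj _ h)].
have nz : forall i, TV (t i) <> TV 0.
  move=> i [] /(proj2 Ht i); done.
have Hk1 : k = 1.
  have := Hall iy (proj2 Hy iy) (nz iy); rewrite -E Ht1 E Hy1 mulr1 => -[] //.
apply: functional_extensionality => i.
have := Hall i (proj2 Hy i) (nz i); rewrite Hk1 mul1r => -[] //.
Qed.
Lemma part1 (n : nat) (s : vec n) : inS s -> Elim (@inS0 n) s.
Proof.
  move=> Hs; split => //.
  have Hs' := Hs; move: Hs' => [Hv [i0 [Hi0 Hj0]]].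
  pose t : vec n := fun i => if s i == 0 then 1 else s i.
  have tnz : forall i, t i <> 0.
    move=> i; rewrite /t; case: eqP => // h; done.
  exists t; split.
    split; last exact: tnz.
    split.
      move=> i; rewrite /t; case: eqP => _; first by right; left.
      by case: (Hv i) => [->|[->|->]]; auto.
    destruct n as [|n']; first by case: (i0).
    exists ord0; split; last by [].
    rewrite /t; case: eqP => // h.
    case: (posnP i0) => h0.
      by rewrite (_ : ord0 = i0) //; apply: val_inj.
    by exfalso; apply: h; apply: Hj0.
  split.
    exists i0; split; first by move=> [] /tnz.
    by rewrite Hi0.
  split; last by [].
  exists 1; split; first by left.
  move=> i h _; rewrite mul1r /t; case: eqP => // //.
Qed.

Theorem mainTheorem7 (n : nat) :
  (forall s : vec n, Elim (@inS0 n) s <-> inS s) /\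
  (forall Y : vec n -> Prop,
     (forall y, Y y -> inS0 y) ->
     (exists y, inS0 y /\ ~ Y y) ->
     ~ (forall s : vec n, Elim Y s <-> inS s)).
Proof.
split.
  move=> s; split; first by case.
  exact: part1.
move=> Y HY [y [Hy Hny]] H.
have [_ [t [Yt El]]] := proj2 (H y) (proj1 Hy).
apply: Hny.
have E := (@S0_eq _ _ _ (HY _ Yt) Hy El).
by rewrite -E.
Qed.
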